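(* Let $X$ be a metric space, $1\le p<\infty$, $c>0$, and assume $0<\epsilon_{X;p}(S)<\infty$ for all $S\ge c$. Let $f\colon[c,\infty)\to[0,\infty)$ be non-decreasing with $$\int_c^\infty\epsilon_{X;p}(S)^p\,d\big(f(S)^p\big)<\infty .$$ Then there exist a Borel measure $\mu$ on $[c,\infty)$, a Lipschitz map $\theta\colon X\to L^p([c,\infty),\mu;\ell^p(X))$ and a non-decreasing function $\rho$ with $\rho\succeq f$ such that $\|\theta(x)-\theta(y)\|_p\ge\rho(d(x,y))$ for all $x,y\in X$.
   Context: For a metric space $(X,d)$ and $1\le p<\infty$, $\ell^p(X)$ is the space of $p$-summable real functions on $X$ and $\ell^p_1(X)$ its unit sphere. For a map $\xi\colon X\to\ell^p(X)$, written $x\mapsto\xi_x$, put $S(\xi)=\sup\{d(x,y):\xi_x(y)\neq0\}$ and $\varepsilon(\xi;p)=\sup_{x\ne y}\|\xi_x-\xi_y\|_p/d(x,y)$. The profile is $\epsilon_{X;p}(S)=\inf\{\varepsilon(\xi;p):\xi\colon X\to\ell^p_1(X),\ S(\xi)\le S\}$. For non-negative monotone functions $f,g$, $f\succeq g$ means there are constants $C,D>0$ with $f(t)\ge Cg(Dt)$ for all sufficiently large $t$. The integral is a Lebesgue–Stieltjes integral with respect to $f^p$. *)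

(* Defs.v *)
From HB Require Import structures.
From mathcomp Require Import all_boot all_order all_algebra.
From mathcomp Require Import all_classical all_reals all_analysis.
Set Implicit Arguments.
Unset Strict Implicit.
Unset Printing Implicit Defensive.
Import Order.TTheory GRing.Theory Num.Theory.
Import numFieldNormedType.Exports.
Local Open Scope classical_set_scope.
Local Open Scope ring_scope.

Section LpDefs.
Context {R : realType} {X : choiceType}.

Definition is_metric (d : X -> X -> R) : Prop :=
  [/\ (forall x y, 0 <= d x y),
      (forall x y, d x y = 0 <-> x = y),
      (forall x y, d x y = d y x) &
      (forall x y z, d x z <= d x y + d y z)].

Definition lp_pow (p : R) (g : X -> R) : \bar R :=
  \esum_(y in [set: X]) ((`|g y| `^ p)%:E).

Definition in_lp (p : R) (g : X -> R) : Prop := (lp_pow p g < +oo)%E.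

(** the l^p norm (meaningful for g in l^p(X)) *)
Definition lp_norm (p : R) (g : X -> R) : R := (fine (lp_pow p g)) `^ p^-1.

Definition in_lp1 (p : R) (g : X -> R) : Prop := in_lp p g /\ lp_norm p g = 1.

Definition supp_radius (d : X -> X -> R) (xi : X -> X -> R) : \bar R :=
  ereal_sup [set r | exists x y, xi x y != 0 /\ r = (d x y)%:E].

Definition eps_xi (d : X -> X -> R) (p : R) (xi : X -> X -> R) : \bar R :=
  ereal_sup [set r | exists x y, x <> y /\
     r = (lp_norm p (fun z => xi x z - xi y z) / d x y)%:E].

Definition eps_profile (d : X -> X -> R) (p : R) (S : R) : \bar R :=
  ereal_inf [set e | exists xi : X -> X -> R,
     [/\ (forall x, in_lp1 p (xi x)), (supp_radius d xi <= S%:E)%E &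
         e = eps_xi d p xi]].

Definition lp_simple (p : R) (D : set R) (s : R -> X -> R) : Prop :=
  [/\ finite_set (s @` D),
      (forall v, measurable (D `&` s @^-1` [set v] : set (measurableTypeR R))) &
      (forall t, D t -> in_lp p (s t)) ].

Definition strongly_measurable (mu : {measure set (measurableTypeR R) -> \bar R})
    (p : R) (D : set R) (g : R -> X -> R) : Prop :=
  exists s : nat -> R -> X -> R, (forall n, lp_simple p D (s n)) /\
    {ae mu, forall t, D t ->
       (fun n => lp_norm p (fun y => s n t y - g t y)) @ \oo --> (0 : R)}.

Definition in_Lp_lp (mu : {measure set (measurableTypeR R) -> \bar R})
    (p : R) (D : set R) (g : R -> X -> R) : Prop :=
  [/\ (forall t, D t -> in_lp p (g t)),
      strongly_measurable mu p D g &
      (\int[mu]_(t in D) ((lp_norm p (g t)) `^ p)%:E < +oo)%E].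

Definition Lp_lp_dist (mu : {measure set (measurableTypeR R) -> \bar R})
    (p : R) (D : set R) (g h : R -> X -> R) : \bar R :=
  poweR (\int[mu]_(t in D)
           ((lp_norm p (fun y => g t y - h t y)) `^ p)%:E) p^-1.

End LpDefs.

(** right-continuous regularization of t |-> f(t)^p, where f is defined on
    [c, +oo) and extended by the constant f(c) to the left of c; its
    Lebesgue--Stieltjes measure is the measure d(f^p) *)
Definition rc_pow {R : realType} (f : R -> R) (p c : R) (t : R) : R :=
  inf [set (f (Num.max s c)) `^ p | s in `]t, +oo[%classic].

Definition succeq {R : realType} (rho f : R -> R) : Prop :=
  exists C D : R, [/\ 0 < C, 0 < D &
    exists T : R, forall t, T <= t -> C * f (D * t) <= rho t].

(* Main.v *)
Require Import Defs.
From HB Require Import structures.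
From mathcomp Require Import all_boot all_order all_algebra.
From mathcomp Require Import all_classical all_reals all_analysis.
From mathcomp Require Import ring lra.
From mathcomp Require Import measurable_realfun.
Import Order.TTheory GRing.Theory Num.Theory.
Import numFieldNormedType.Exports.
Local Open Scope classical_set_scope.
Local Open Scope ring_scope.

Section Aux.
Context {R : realType} {X : choiceType}.

Lemma esum_scale_le (k : R) (a : X -> \bar R) : (0 <= k)%R ->
  (forall x, 0 <= a x)%E ->
  (\esum_(i in [set: X]) (k%:E * a i) <= k%:E * \esum_(i in [set: X]) a i)%E.
Proof.
move=> k0 a0; apply: ge_ereal_sup => _ [Y [finY _] <-].
rewrite -ge0_mule_fsumr//.
apply: lee_wpmul2l; first by rewrite lee_fin.
apply: ereal_sup_ubound; by exists Y.
Qed.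
Variable p : R.
Hypothesis hp : (1 <= p)%R.
Let p0 : (0 < p)%R. Proof. exact: lt_le_trans hp. Qed.
Let pn0 : p != 0%R. Proof. by rewrite gt_eqF. Qed.

Lemma pow_sub_le (a b : R) :
  (`|a - b| `^ p <= 2 `^ p * (`|a| `^ p + `|b| `^ p))%R.
Proof.
wlog ab : a b / (`|b| <= `|a|)%R.
  move=> H; case: (leP `|b| `|a|) => [ba|/ltW ba]; first exact: H.
  by rewrite distrC (addrC (`|a| `^ p)); exact: H.
apply: (@le_trans _ _ ((2 * `|a|) `^ p)%R).
  apply: ge0_ler_powR; rewrite ?nnegrE; first exact: ltW.
  - by [].
  - by rewrite mulr_ge0.
  - by have := ler_normB a b; lra.
rewrite powRM// ler_wpM2l ?powR_ge0// lerDl powR_ge0//.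
Qed.

Lemma lp_pow_ge0 (g : X -> R) : (0 <= lp_pow p g)%E.
Proof. by apply: esum_ge0 => x _; rewrite lee_fin powR_ge0. Qed.

Lemma lp_pow_zero : lp_pow p (fun _ : X => 0%R) = 0%E.
Proof. by rewrite /lp_pow esum1// => x _; rewrite normr0 powR0. Qed.

Lemma lp_norm_zero : lp_norm p (fun _ : X => 0%R) = 0%R.
Proof. by rewrite /lp_norm lp_pow_zero /= powR0// invr_eq0. Qed.

Lemma in_lp_zero : in_lp p (fun _ : X => 0%R).
Proof. by rewrite /in_lp lp_pow_zero ltry. Qed.

Lemma lp_pow_fin (g : X -> R) : in_lp p g -> lp_pow p g = (fine (lp_pow p g))%:E.
Proof. by move=> h; rewrite fineK// ge0_fin_numE// lp_pow_ge0. Qed.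

Lemma lp_norm_powp (g : X -> R) : (lp_norm p g `^ p)%R = fine (lp_pow p g).
Proof.
by rewrite /lp_norm -powRrM mulVf// powRr1// fine_ge0// lp_pow_ge0.
Qed.

Lemma lp_norm_ge0 (g : X -> R) : (0 <= lp_norm p g)%R.
Proof. exact: powR_ge0. Qed.

Lemma in_lp_sub (g h : X -> R) : in_lp p g -> in_lp p h -> in_lp p (fun z => g z - h z)%R.
Proof.
move=> /lp_pow_fin hg /lp_pow_fin hh; rewrite /in_lp.
apply: (@le_lt_trans _ _ (\esum_(i in [set: X])
   ((2 `^ p)%:E * ((`|g i| `^ p)%:E + (`|h i| `^ p)%:E)))%E).
  by apply: le_esum => z _; rewrite -EFinD -EFinM lee_fin pow_sub_le.
apply: (le_lt_trans (esum_scale_le (2 `^ p) (fun i => ((`|g i| `^ p)%:E + (`|h i| `^ p)%:E)%E) (powR_ge0 2 p) _)).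
  by move=> z; rewrite adde_ge0// lee_fin powR_ge0.
rewrite esumD; last 2 first.
- by move=> z _; rewrite lee_fin powR_ge0.
- by move=> z _; rewrite lee_fin powR_ge0.
by rewrite -[X in _ + X]/(lp_pow p h) -[X in X + _]/(lp_pow p g) hg hh -EFinD -EFinM ltry.
Qed.

Variable d : X -> X -> R.
Hypothesis hd : is_metric d.

Lemma d_ge0 x y : (0 <= d x y)%R. Proof. by case: hd. Qed.
Lemma d_eq0 x y : d x y = 0%R <-> x = y. Proof. by case: hd. Qed.
Lemma d_sym x y : d x y = d y x. Proof. by case: hd. Qed.
Lemma d_tri x y z : (d x z <= d x y + d y z)%R. Proof. by case: hd. Qed.

Lemma xi_upper (xi : X -> X -> R) (e : R) : eps_xi d p xi = e%:E ->
  forall x y, (lp_norm p (fun z => xi x z - xi y z) <= e * d x y)%R.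
Proof.
move=> he x y; case: (pselect (x = y)) => [<-|nxy].
  have -> : (fun z => xi x z - xi x z) = (fun _ => 0)%R.
    by apply: funext => z; rewrite subrr.
  by rewrite lp_norm_zero (proj2 (d_eq0 x x) erefl) mulr0.
have dpos : (0 < d x y)%R.
  by rewrite lt_neqAle d_ge0 andbT eq_sym; apply/eqP => /d_eq0.
have : ((lp_norm p (fun z => xi x z - xi y z) / d x y)%:E <= e%:E)%E.
  by rewrite -he; apply: ereal_sup_ubound; exists x, y.
by rewrite lee_fin ler_pdivrMr.
Qed.

Lemma xi_lower (xi : X -> X -> R) (r : R) x y :
  (forall x, in_lp1 p (xi x)) -> (supp_radius d xi <= r%:E)%E ->
  (2 * r < d x y)%R -> (1 <= lp_norm p (fun z => xi x z - xi y z) `^ p)%R.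
Proof.
move=> hxi hs hr; rewrite lp_norm_powp.
have h1 : fine (lp_pow p (xi x)) = 1%R.
  by rewrite -lp_norm_powp (proj2 (hxi x)) powR1.
have hsupp u z : xi u z != 0%R -> (d u z <= r)%R.
  move=> hu; rewrite -lee_fin; apply: le_trans hs.
  by apply: ereal_sup_ubound; exists u, z.
rewrite -h1; apply: fine_le.
- by rewrite ge0_fin_numE ?lp_pow_ge0//; exact: (proj1 (hxi x)).
- rewrite ge0_fin_numE ?lp_pow_ge0//.
  by apply: in_lp_sub; [exact: (proj1 (hxi x))|exact: (proj1 (hxi y))].
apply: le_esum => z _; rewrite lee_fin.
case: (eqVneq (xi y z) 0%R) => [->|hy]; first by rewrite subr0.
case: (eqVneq (xi x z) 0%R) => [->|hx]; first by rewrite normr0 powR0// powR_ge0.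
have := hsupp _ _ hy; have := hsupp _ _ hx; have := d_tri x z y.
rewrite (d_sym z y); lra.
Qed.

Lemma eps_profile_mono (S S' : R) : (S <= S')%R ->
  (eps_profile d p S' <= eps_profile d p S)%E.
Proof.
move=> SS'; apply: ereal_inf_le_tmp => e [xi [h1 h2 ->]]; exists xi; split => //.
by apply: le_trans h2 _; rewrite lee_fin.
Qed.

End Aux.

Lemma meas_outside {R : realType} (Y : Type) (atom : nat -> R)
  (s : measurableTypeR R -> Y) (y0 : Y) (D : set (measurableTypeR R)) :
  measurable D -> (forall t, ~ (exists k, t = atom k) -> s t = y0) ->
  forall P : set Y, measurable (D `&` s @^-1` P).
Proof.
move=> mD hs P.
have -> : D `&` s @^-1` P = D `&` ((\bigcup_(k in [set k | P (s (atom k))])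
    [set (atom k : measurableTypeR R)]) `|`
    (~` (\bigcup_k [set (atom k : measurableTypeR R)]) `&` [set _ | P y0])).
  apply/seteqP; split => t /=.
    move=> [Dt Pt]; split => //.
    case: (pselect (exists k, t = atom k)) => [[k tk]|nk].
      by left; exists k => //; rewrite /= -tk.
    right; split; last by rewrite -(hs t nk).
    by move=> [k _ tk]; apply: nk; exists k.
  move=> [Dt [[k Pk tk]|[nk Py0]]]; split => //.
    by rewrite /preimage /= tk.
  rewrite /preimage /= hs //; move=> [k tk]; apply: nk; exists k => //.
apply: measurableI => //; apply: measurableU.
  by apply: bigcup_measurable => k _; exact: measurable_set1.
apply: measurableI.
  by apply: measurableC; apply: bigcup_measurable => k _; exact: measurable_set1.
case: (pselect (P y0)) => h.
  have -> : [set _ : measurableTypeR R | P y0] = setT by apply/seteqP; split.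
  exact: measurableT.
have -> : [set _ : measurableTypeR R | P y0] = set0 by apply/seteqP; split.
exact: measurable0.
Qed.

Notation ebarM R := (measurable_realfun.constructive_ereal_extended__canonical__measurable_structure_SigmaRing R).

Lemma ls_oc {R : realType} (F : cumulative R R) (a b : R) : (a <= b)%R ->
  lebesgue_stieltjes_measure F (`]a, b]%classic) = (F b - F a)%:E.
Proof.
move=> ab; rewrite /lebesgue_stieltjes_measure /measure_extension measurable_mu_extE/=; last exact: is_ocitv.
by rewrite wlength_itv_bnd.
Qed.

Lemma stieltjes_bound {R : realType} (F : cumulative R R) (g : R -> R) (p c : R) :
  (0 < p)%R -> (0 < c)%R ->
  (forall s t, c <= s -> s <= t -> g t <= g s)%R ->
  (forall s, c <= s -> 0 <= g s)%R ->
  (\sum_(k <oo) (((F (c * 2 ^+ k.+1) - F (c * 2 ^+ k)) * (g (c * 2 ^+ k.+1)) `^ p)%:E)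
   <= \int[lebesgue_stieltjes_measure F]_(S in `[c, +oo[) ((g S) `^ p)%:E)%E.
Proof.
move=> p0 c0 gmono gge0.
set a := fun k : nat => (c * 2 ^+ k)%R.
have amono m n : (m <= n)%N -> (a m <= a n)%R.
  move=> mn; apply: ler_wpM2l; first exact: ltW.
  by rewrite ler_eXn2l// ltr1n.
have ac k : (c <= a k)%R.
  rewrite /a -[leLHS]mulr1; apply: ler_wpM2l; first exact: ltW.
  by rewrite exprn_ege1// ler1n.
pose G := fun t : R => ((g t) `^ p)%:E.
have mG : measurable_fun (T := measurableTypeR R) (U := ebarM R) `[c, +oo[%classic G.
  apply: (eq_measurable_fun (T1 := measurableTypeR R) (T2 := ebarM R) (fun t : R => ((g (Num.max t c)) `^ p)%:E)).
    move=> t; rewrite inE /= in_itv /= andbT => ct.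
    by rewrite /G max_l.
  apply/measurable_EFinP; apply: nonincreasing_measurable => //.
  move=> s t st; apply: ge0_ler_powR; rewrite ?nnegrE; first exact: ltW.
  - by apply: gge0; rewrite le_max lexx orbT.
  - by apply: gge0; rewrite le_max lexx orbT.
  apply: gmono; first by rewrite le_max lexx orbT.
  by rewrite ge_max !le_max lexx st orbT.
pose Fk := fun k => (`]a k, a k.+1]%classic : set (measurableTypeR R)).
have sub : \bigcup_k Fk k `<=` `[c, +oo[%classic.
  move=> t [k _]; rewrite /Fk /= !in_itv /= andbT => /andP[akt _].
  exact: le_trans (ac k) (ltW akt).
apply: (@le_trans _ _ (\int[lebesgue_stieltjes_measure F]_(S in \bigcup_k Fk k) G S)%E); last first.
  apply: ge0_subset_integral => //.
  - by apply: (@bigcup_measurable _ _ Fk setT) => k _; exact: measurable_itv.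
  - by move=> t _; rewrite lee_fin powR_ge0.
rewrite ge0_integral_bigcup//; last 4 first.
- by move=> k; exact: measurable_itv.
- exact: measurable_funS mG.
- by move=> t _; rewrite lee_fin powR_ge0.
- move=> i j _ _ [t [ti tj]].
  move: ti tj; rewrite /Fk /= !in_itv /= => /andP[ai ai1] /andP[aj aj1].
  case: (ltngtP i j) => // ij.
    by have := le_lt_trans (le_trans ai1 (amono _ _ ij)) aj; rewrite ltxx.
  by have := le_lt_trans (le_trans aj1 (amono _ _ ij)) ai; rewrite ltxx.
apply: lee_nneseries => k _.
  rewrite lee_fin mulr_ge0 ?powR_ge0// subr_ge0.
  by apply: cumulative_is_nondecreasing; apply: amono.
rewrite EFinM muleC -ls_oc; last exact: (amono k k.+1 (leqnSn k)).
rewrite -integral_cst; last exact: measurable_itv.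
apply: ge0_le_integral => //.
- by move=> t _; rewrite lee_fin powR_ge0.
- apply: (measurable_funS (measurable_itv _) _ mG) => t.
  rewrite /= !in_itv/= andbT => /andP[akt _].
  exact: le_trans (ac k) (ltW akt).
move=> t; rewrite /Fk /= in_itv /= => /andP[akt tak]; rewrite lee_fin.
apply: ge0_ler_powR; rewrite ?nnegrE; first exact: ltW.
- by apply: gge0; apply: ac.
- by apply: gge0; apply: le_trans (ac k) (ltW akt).
by apply: gmono => //; apply: le_trans (ac k) (ltW akt).
Qed.

Lemma series_recl {R : realType} (f : nat -> \bar R) : (forall k, 0 <= f k)%E ->
  (\sum_(k <oo) f k = f 0%N + \sum_(k <oo) f k.+1)%E.
Proof.
move=> f0; rewrite nneseries_recl// -nneseries_addn//.
by under eq_eseriesr do rewrite addn1.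
Qed.

Lemma telescope_sum {R : realType} (u : nat -> R) n :
  (\sum_(0 <= k < n.+1) (if k is k'.+1 then u k - u k' else u 0%N)%:E = (u n)%:E)%E.
Proof.
elim: n => [|n IH]; first by rewrite big_nat1.
rewrite big_nat_recr//= IH -EFinD; congr (_%:E); lra.
Qed.

Theorem corollary2p4p4 (R : realType) (X : choiceType) (d : X -> X -> R)
  (p c : R) (f : R -> R) (F : cumulative R R) :
  is_metric d ->
  1 <= p -> 0 < c ->
  (forall S, c <= S -> (0 < eps_profile d p S < +oo)%E) ->
  (forall S, c <= S -> 0 <= f S) ->
  (forall s t, c <= s -> s <= t -> f s <= f t) ->
  (forall t, F t = rc_pow f p c t) ->
  (\int[lebesgue_stieltjes_measure F]_(S in `[c, +oo[)
      ((fine (eps_profile d p S)) `^ p)%:E < +oo)%E ->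
  exists (mu : {measure set (measurableTypeR R) -> \bar R})
         (theta : X -> R -> X -> R) (rho : R -> R),
    [/\ (forall x, in_Lp_lp mu p `[c, +oo[ (theta x)),
        (exists L : R, 0 <= L /\ forall x y,
            (Lp_lp_dist mu p `[c, +oo[ (theta x) (theta y) <= (L * d x y)%:E)%E),
        (forall s t, 0 <= s -> s <= t -> rho s <= rho t) /\
          (forall t, 0 <= t -> 0 <= rho t),
        succeq rho f &
        (forall x y,
            ((rho (d x y))%:E <= Lp_lp_dist mu p `[c, +oo[ (theta x) (theta y))%E)].
Proof.
move=> hd hp c0 hprof hf0 hfmono hF hint.
have p0 : 0 < p by apply: lt_le_trans hp.
have pn0 : p != 0 by rewrite gt_eqF.
pose phi S := fine (eps_profile d p S).
have phiE S : c <= S -> eps_profile d p S = (phi S)%:E.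
  move=> cS; have /andP[h1 h2] := hprof S cS.
  by rewrite /phi fineK// ge0_fin_numE// ltW.
have phipos S : c <= S -> 0 < phi S.
  by move=> cS; have /andP[h1 _] := hprof S cS; rewrite -lte_fin -phiE.
have phimono s t : c <= s -> s <= t -> phi t <= phi s.
  move=> cs st; rewrite -lee_fin -!phiE//; last exact: le_trans st.
  exact: eps_profile_mono.
pose a := fun k : nat => c * 2 ^+ k.
have amono m n : (m <= n)%N -> a m <= a n.
  move=> mn; apply: ler_wpM2l; first exact: ltW.
  by rewrite ler_eXn2l// ltr1n.
have ac k : c <= a k.
  rewrite /a -[leLHS]mulr1; apply: ler_wpM2l; first exact: ltW.
  by rewrite exprn_ege1// ler1n.
have hxi k : exists xi : X -> X -> R, [/\ (forall x, in_lp1 p (xi x)),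
    (supp_radius d xi <= (a k)%:E)%E & (eps_xi d p xi < (2 * phi (a k))%:E)%E].
  have : (eps_profile d p (a k) < (2 * phi (a k))%:E)%E.
    by rewrite phiE// lte_fin; have := phipos _ (ac k); lra.
  move=> /ereal_inf_lt [_ [xi [h1 h2 ->]] h3]; by exists xi.
have [xi hxi'] := choice hxi.
pose e k := fine (eps_xi d p (xi k)).
have eE k : eps_xi d p (xi k) = (e k)%:E.
  have [_ _ h3] := hxi' k.
  have h4 : (eps_profile d p (a k) <= eps_xi d p (xi k))%E.
    apply: ereal_inf_lbound; exists (xi k); split => //; by case: (hxi' k).
  rewrite /e fineK// ge0_fin_numE; first exact: lt_trans h3 (ltry _).
  by apply: le_trans h4; rewrite phiE// lee_fin ltW// phipos.
have e_le k : e k <= 2 * phi (a k).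
  by have [_ _] := hxi' k; rewrite eE lte_fin => /ltW.
have e_ge0 k : 0 <= e k.
  have h4 : (eps_profile d p (a k) <= eps_xi d p (xi k))%E.
    apply: ereal_inf_lbound; exists (xi k); split => //; by case: (hxi' k).
  by move: h4; rewrite eE phiE// lee_fin => /(le_trans _)-> //; rewrite ltW// phipos.
have hFf t : c <= t -> f t `^ p <= F t.
  move=> ct; rewrite hF /rc_pow; apply: lb_le_inf.
    by exists (f (Num.max (t + 1) c) `^ p); exists (t + 1) => //=; rewrite in_itv/= andbT ltrDl.
  move=> y [s]; rewrite /= in_itv/= andbT => ts <-.
  have cs : c <= s by apply: le_trans ct (ltW ts).
  rewrite max_l//; apply: ge0_ler_powR; rewrite ?nnegrE; first exact: ltW.
  - exact: hf0.
  - exact: hf0.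
  by apply: hfmono => //; exact: ltW.
pose w k := if k is k'.+1 then F (a k) - F (a k') else F (a 0%N).
have w_ge0 k : 0 <= w k.
  case: k => [|k] /=.
    by apply: le_trans (hFf _ (ac 0%N)); exact: powR_ge0.
  rewrite subr_ge0.
  by move: (cumulative_is_nondecreasing F _ _ (amono k k.+1 (leqnSn k))).
pose wn k : {nonneg R} := NngNum (w_ge0 k).
pose atom k : R := c + k%:R.
have atomD k : `[c, +oo[%classic (atom k).
  by rewrite /= in_itv/= andbT lerDl.
have atom_inj k k' : atom k = atom k' -> k = k'.
  by move/addrI/eqP; rewrite eqr_nat => /eqP.
pose mu := mseries (fun k => mscale (wn k) (\d_(atom k : measurableTypeR R))) 0.
pose D := (`[c, +oo[%classic : set (measurableTypeR R)).
have mD : measurable D by exact: measurable_itv.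
have intE (h : measurableTypeR R -> \bar R) (h0 : \bar R) :
    (forall t, 0 <= h t)%E -> (forall t, ~ (exists k, t = atom k) -> h t = h0) ->
    (\int[mu]_(t in D) h t = \sum_(k <oo) (w k)%:E * h (atom k))%E.
  move=> hge0 hout.
  have mh : measurable_fun (U := ebarM R) D h.
    by move=> _ Y mY; apply: (meas_outside _ atom h h0) => //; exact: hout.
  rewrite ge0_integral_measure_series//.
  apply: eq_eseriesr => k _.
  rewrite ge0_integral_mscale// integral_dirac// diracE mem_set; last exact: atomD.
  by rewrite /= mul1e.
pose K := (\sum_(k <oo) (w k)%:E * ((e k) `^ p)%:E)%E.
have K_ge0 : (0 <= K)%E.
  by apply: nneseries_ge0 => k _; rewrite -EFinM lee_fin mulr_ge0// powR_ge0.
have Kfin : K \is a fin_num.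
  rewrite ge0_fin_numE//.
  apply: (@le_lt_trans _ _ (\sum_(k <oo) ((2 `^ p)%:E * (w k * phi (a k) `^ p)%:E))%E).
    apply: lee_nneseries => k _.
      by rewrite -EFinM lee_fin mulr_ge0// powR_ge0.
    rewrite -!EFinM lee_fin mulrCA ler_wpM2l//.
    rewrite -powRM; last 2 first.
    - by rewrite ler0n.
    - by rewrite ltW// phipos.
    apply: ge0_ler_powR; rewrite ?nnegrE; first exact: ltW.
    - exact: e_ge0.
    - by rewrite mulr_ge0// ltW// phipos.
    exact: e_le.
  rewrite nneseriesZl; last by move=> k _; rewrite lee_fin mulr_ge0// powR_ge0.
  rewrite series_recl; last by move=> k; rewrite lee_fin mulr_ge0// powR_ge0.
  set S' := (\sum_(k <oo) _)%E.
  have S'ge0 : (0 <= S')%E.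
    by apply: nneseries_ge0 => k _; rewrite lee_fin mulr_ge0// powR_ge0.
  have S'fin : S' \is a fin_num.
    rewrite ge0_fin_numE//; apply: le_lt_trans hint.
    have := stieltjes_bound F phi p c p0 c0 (fun s t cs st => phimono s t cs st)
      (fun s cs => ltW (phipos s cs)).
    by [].
  by rewrite -(fineK S'fin) -EFinD -EFinM ltry.
have KE : K = (fine K)%:E by rewrite fineK.
pose L := fine K `^ p^-1.
pose rho t := if 8 * c <= t then f (8^-1 * t) else 0.
have rho_mono s t : 0 <= s -> s <= t -> rho s <= rho t.
  move=> s0 st; rewrite /rho.
  case: ifPn => hs; case: ifPn => ht.
  - by apply: hfmono; lra.
  - by exfalso; move/negP: ht; apply; lra.
  - by apply: hf0; lra.
  - by [].
have rho_ge0 t : 0 <= t -> 0 <= rho t.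
  by move=> t0; rewrite /rho; case: ifPn => // ht; apply: hf0; lra.
have rho_succ : succeq rho f.
  exists 1, 8^-1; split => //; exists (8 * c) => t ht.
  by rewrite /rho ht mul1r.
have hxi1 k x : in_lp p (xi k x) by have [h _ _] := hxi' k; exact: (proj1 (h x)).
case: (pselect (exists x : X, True)) => [[x0 _]|X0]; last first.
  exists mu, (fun _ _ _ => 0), rho; split => //.
  - by move=> x; exfalso; apply: X0; exists x.
  - by exists 0; split => // x; exfalso; apply: X0; exists x.
  - by move=> x; exfalso; apply: X0; exists x.
pose th := fun (x : X) (t : R) => match pselect (exists k, t = atom k) with
  | left H => (fun z => xi (sval (cid H)) x z - xi (sval (cid H)) x0 z)
  | right _ => (fun _ => 0) end.
have th_atom x k : th x (atom k) = (fun z => xi k x z - xi k x0 z).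
  rewrite /th; case: pselect => [H|H]; last by exfalso; apply: H; exists k.
  by case: (cid H) => k' /= /atom_inj ->.
have th_out x t : ~ (exists k, t = atom k) -> th x t = (fun _ => 0).
  by move=> H; rewrite /th; case: pselect.
have diff_out x y t : ~ (exists k, t = atom k) ->
    (fun z => th x t z - th y t z) = (fun _ => 0).
  by move=> H; rewrite !th_out//; apply: funext => z; rewrite subr0.
have diff_atom x y k : (fun z => th x (atom k) z - th y (atom k) z) =
    (fun z => xi k x z - xi k y z).
  by rewrite !th_atom; apply: funext => z; lra.
pose I x y := (\int[mu]_(t in D) ((lp_norm p (fun z => th x t z - th y t z)) `^ p)%:E)%E.
have IE x y : I x y = (\sum_(k <oo) (w k)%:E *
    ((lp_norm p (fun z => xi k x z - xi k y z)) `^ p)%:E)%E.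
  rewrite /I (intE _ ((lp_norm p (fun _ : X => 0)) `^ p)%:E).
  - by apply: eq_eseriesr => k _; rewrite diff_atom.
  - by move=> t; rewrite lee_fin powR_ge0.
  - by move=> t H; rewrite diff_out.
have I_ge0 x y : (0 <= I x y)%E.
  by rewrite IE; apply: nneseries_ge0 => k _; rewrite -EFinM lee_fin mulr_ge0// powR_ge0.
have Iup x y : (I x y <= (d x y `^ p)%:E * K)%E.
  rewrite IE /K -nneseriesZl; last by move=> k _; rewrite -EFinM lee_fin mulr_ge0// powR_ge0.
  apply: lee_nneseries => k _.
    by rewrite -EFinM lee_fin mulr_ge0// powR_ge0.
  rewrite -!EFinM lee_fin mulrCA; apply: ler_wpM2l; first exact: w_ge0.
  rewrite -powRM; last 2 first.
  - exact: d_ge0.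
  - exact: e_ge0.
  apply: ge0_ler_powR; rewrite ?nnegrE; first exact: ltW.
  - exact: lp_norm_ge0.
  - by rewrite mulr_ge0// ?e_ge0//; exact: d_ge0.
  by rewrite mulrC; exact: (xi_upper p hp d hd (xi k) (e k) (eE k) x y).
have LE x y : Lp_lp_dist mu p `[c, +oo[ (th x) (th y) = poweR (I x y) p^-1 by [].
have thx0 t : th x0 t = (fun _ => 0).
  case: (pselect (exists k, t = atom k)) => [[k ->]|H]; last by rewrite th_out.
  by rewrite th_atom; apply: funext => z; rewrite subrr.
exists mu, th, rho; split => //.
- move=> x; split.
  + move=> t Dt; case: (pselect (exists k, t = atom k)) => [[k ->]|H].
      by rewrite th_atom; apply: (in_lp_sub p hp); exact: hxi1.
    by rewrite th_out//; exact: (in_lp_zero p hp).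
  + exists (fun (n : nat) (t : R) =>
      if pselect (exists k, (k <= n)%N /\ t = atom k) is left _ then th x t
      else (fun _ : X => 0)).
    split.
      move=> n; split.
      * apply: (@sub_finite_set _ _ ((fun k => th x (atom k)) @` `I_n.+1 `|`
          [set (fun _ : X => 0)])).
          move=> _ [t Dt <-]; case: pselect => [[k [kn ->]]|_].
            by left; exists k => //=; rewrite ltnS.
          by right.
        rewrite finite_setU; split; first by apply: finite_image; exact: finite_II.
        exact: finite_set1.
      * move=> v; apply: (meas_outside _ atom _ (fun _ : X => 0)) => // t H.
        case: pselect => // [[k [_ tk]]]; exfalso; apply: H; by exists k.
      * move=> t Dt; case: pselect => _.
          case: (pselect (exists k, t = atom k)) => [[k ->]|H].
            by rewrite th_atom; apply: (in_lp_sub p hp); exact: hxi1.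
          by rewrite th_out//; exact: (in_lp_zero p hp).
        exact: (in_lp_zero p hp).
    apply: aeW => t Dt.
    case: (pselect (exists k, t = atom k)) => [[k tk]|H].
      apply: cvg_near_cst; exists k => // n /= kn.
      case: pselect => [_|H]; last by exfalso; apply: H; exists k.
      have -> : (fun y => th x t y - th x t y) = (fun _ => 0).
        by apply: funext => z; rewrite subrr.
      exact: (lp_norm_zero p hp).
    apply: cvg_near_cst; apply: nearW => n.
    case: pselect => [[k [_ tk]]|_]; first by exfalso; apply: H; exists k.
    rewrite th_out//.
    have -> : (fun y : X => 0 - 0) = (fun _ => 0 : R) by apply: funext => z; rewrite subr0.
    exact: (lp_norm_zero p hp).
  + have -> : (fun t => ((lp_norm p (th x t)) `^ p)%:E) =
        (fun t => ((lp_norm p (fun z => th x t z - th x0 t z)) `^ p)%:E).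
      by apply: funext => t; rewrite thx0; congr ((lp_norm p _ `^ p)%:E); apply: funext => z; rewrite subr0.
    apply: le_lt_trans (Iup x x0) _.
    by rewrite KE -EFinM ltry.
- exists L; split; first exact: powR_ge0.
  move=> x y; rewrite LE.
  apply: (@le_trans _ _ (poweR ((d x y `^ p)%:E * K) p^-1)).
    apply: gt0_ler_poweR; first by rewrite invr_ge0 ltW.
    - by rewrite in_itv /= leey andbT.
    - by rewrite in_itv /= leey andbT KE -EFinM lee_fin mulr_ge0// ?powR_ge0// fine_ge0.
    exact: Iup.
  rewrite KE -EFinM poweR_EFin lee_fin powRM ?powR_ge0// ?fine_ge0//.
  rewrite -powRrM mulfV// powRr1; last exact: d_ge0.
  by rewrite mulrC.
move=> x y; rewrite LE /rho; case: ifPn => h8; last exact: poweR_ge0.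
set r := 8^-1 * d x y.
have cr : c <= r by rewrite /r; lra.
have r0 : 0 <= r / c by rewrite divr_ge0// ltW//; exact: lt_le_trans cr.
have hex : exists n, r <= a n.
  exists (Num.Def.archi_bound (r / c)).
  set N := Num.Def.archi_bound (r / c).
  have := archi_boundP r0; rewrite -/N ltr_pdivrMr// => hN.
  apply: (le_trans (ltW hN)); rewrite /a mulrC; apply: ler_wpM2l; first exact: ltW.
  rewrite -natrX ler_nat; exact: ltnW (ltn_expl _ _).
case: (ex_minnP hex) => n hn hmin.
have an4 : a n <= 4^-1 * d x y.
  case: n hn hmin => [|m] hn hmin.
    have a0 : a 0%N = c by rewrite /a expr0 mulr1.
    by rewrite a0; rewrite /r in cr; lra.
  have hm : a m < r.
    by rewrite ltNge; apply/negP => /hmin; rewrite ltnn.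
  have : a m.+1 = 2 * a m by rewrite /a exprS mulrCA.
  by rewrite /r in hm; lra.
have dpos : 0 < d x y by lra.
have key : ((f r `^ p)%:E <= I x y)%E.
  rewrite IE; apply: le_trans (nneseries_lim_ge n.+1 _); last first.
    by move=> k _ _; rewrite -EFinM lee_fin mulr_ge0// powR_ge0.
  apply: (@le_trans _ _ (\sum_(0 <= k < n.+1) (w k)%:E)%E).
    have -> : (\sum_(0 <= k < n.+1) (w k)%:E)%E = (F (a n))%:E.
      exact: (telescope_sum (fun k => F (a k)) n).
    rewrite lee_fin; apply: le_trans (hFf _ (ac n)).
    apply: ge0_ler_powR; rewrite ?nnegrE; first exact: ltW.
    - exact: hf0.
    - exact: hf0 (ac n).
    exact: hfmono.
  rewrite big_nat_cond [X in (_ <= X)%E]big_nat_cond.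
  apply: lee_sum => k /andP[/andP[_ kn] _].
  rewrite -EFinM lee_fin; apply: ler_peMr; first exact: w_ge0.
  have [h1 h2 _] := hxi' k.
  apply: (xi_lower p hp d hd (xi k) (a k) x y h1 h2).
  have := amono k n kn; lra.
have -> : f r = (f r `^ p) `^ p^-1.
  by rewrite -powRrM mulfV// powRr1//; exact: hf0.
rewrite -poweR_EFin; apply: gt0_ler_poweR; first by rewrite invr_ge0 ltW.
- by rewrite in_itv /= leey andbT lee_fin powR_ge0.
- by rewrite in_itv /= leey andbT.
exact: key.
Qed.
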